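(* The triangle $T=P_1P_2P_3$ is never equilateral, so its Euler line (the line through its centroid $O$ and its circumcenter) is well defined. Suppose that for each pair of corresponding sides, the lines $P_jP_k$ and $P_j'P_k'$ ($\{j,k\}\subset\{1,2,3\}$) are not parallel. Then the three intersection points $P_jP_k\cap P_j'P_k'$ lie on a line (the perspectrix of the perspective triangles $T$ and $T'=P_1'P_2'P_3'$), and this line is perpendicular to the Euler line of $T$.
   Context: Let $a>b>0$ and $c>0$ with $c^2=a^2-b^2$. Let $\mathcal{E}$ be the ellipse $x^2/a^2+y^2/b^2=1$ with center $O=(0,0)$, parametrized by $P(t)=(a\cos t,b\sin t)$. Fix $u\in\mathbb{R}$, let $M=(a\cos u,b\sin u)$ and $\Delta_u(t)=(x_u(t),y_u(t))$, where $x_u(t)=\frac1a\big(c^2(1+\cos(t+u))\cos t-a^2\cos u\big)$ and $y_u(t)=\frac1b\big(c^2\cos t\sin(t+u)-c^2\sin t-a^2\sin u\big)$ (the negative pedal curve of $\mathcal{E}$ with respect to $M$). For $i=1,2,3$ let $t_i=-u/3-2\pi(i-1)/3$, $P_i=P(t_i)$, $P_i'=\Delta_u(t_i)$ (the cusps). *)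

(* Defs.v *)
From Stdlib Require Import Reals.
Open Scope R_scope.

Definition pt := (R * R)%type.

Definition Pe (a b t : R) : pt := (a * cos t, b * sin t).

(* negative pedal curve Delta_u(t) *)
Definition Delta (a b c u t : R) : pt :=
  ( / a * (c ^ 2 * (1 + cos (t + u)) * cos t - a ^ 2 * cos u),
    / b * (c ^ 2 * cos t * sin (t + u) - c ^ 2 * sin t - a ^ 2 * sin u) ).

Definition tcusp (u : R) (i : nat) : R := - u / 3 - 2 * PI * (INR i - 1) / 3.

Definition Pi (a b u : R) (i : nat) : pt := Pe a b (tcusp u i).
Definition Pi' (a b c u : R) (i : nat) : pt := Delta a b c u (tcusp u i).

Definition sqdist (p q : pt) : R := (fst p - fst q) ^ 2 + (snd p - snd q) ^ 2.

Definition equilateral (p q r : pt) : Prop :=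
  sqdist p q = sqdist q r /\ sqdist q r = sqdist r p.

Definition centroid (p q r : pt) : pt :=
  ((fst p + fst q + fst r) / 3, (snd p + snd q + snd r) / 3).

Definition is_circumcenter (C p q r : pt) : Prop :=
  sqdist C p = sqdist C q /\ sqdist C q = sqdist C r.

Definition cross_dir (p q r s : pt) : R :=
  (fst q - fst p) * (snd s - snd r) - (snd q - snd p) * (fst s - fst r).

(* line pq and line rs are not parallel (this presupposes p<>q and r<>s) *)
Definition not_parallel (p q r s : pt) : Prop := cross_dir p q r s <> 0.

Definition on_line (X p q : pt) : Prop :=
  (fst q - fst p) * (snd X - snd p) - (snd q - snd p) * (fst X - fst p) = 0.

Definition on_line_dir (X Q d : pt) : Prop :=
  fst d * (snd X - snd Q) - snd d * (fst X - fst Q) = 0.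

Definition dot (v w : pt) : R := fst v * fst w + snd v * snd w.
Definition vsub (p q : pt) : pt := (fst p - fst q, snd p - snd q).

(* Main.v *)
Require Import Defs.
From Stdlib Require Import Reals Lra Psatz.
Open Scope R_scope.

Definition det2 (v w : pt) : R := fst v * snd w - snd v * fst w.
Definition Dlin (u1 u2 n0 : pt) (c1 c2 k : R) : R :=
  -(det2 u1 u2) * k + det2 n0 u2 * c1 + det2 u1 n0 * c2.
Definition lnorm (p q : pt) : pt := (-(snd q - snd p), fst q - fst p).
Definition n2 (p : pt) : R := fst p ^ 2 + snd p ^ 2.
Definition cuv (p q : pt) : pt := (2 * (fst q - fst p), 2 * (snd q - snd p)).
Definition ccv (p q : pt) : R := n2 q - n2 p.

Lemma lin3 (u1 u2 n0 X : pt) (c1 c2 k : R) : det2 u1 u2 <> 0 ->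
  dot u1 X = c1 -> dot u2 X = c2 -> Dlin u1 u2 n0 c1 c2 k = 0 -> dot n0 X = k.
Proof.
  intros Hd H1 H2 H3.
  assert (E: det2 u1 u2 * (dot n0 X - k) = det2 n0 u2 * (dot u1 X - c1)
     + det2 u1 n0 * (dot u2 X - c2) + Dlin u1 u2 n0 c1 c2 k).
  { destruct u1, u2, n0, X; unfold Dlin, det2, dot; simpl; ring. }
  rewrite H1, H2, H3 in E.
  assert (E2 : det2 u1 u2 * (dot n0 X - k) = 0) by (rewrite E; ring).
  destruct (Rmult_integral _ _ E2) as [h|h]; [contradiction | lra].
Qed.

Lemma uniq2 (u1 u2 X Y : pt) (c1 c2 : R) : det2 u1 u2 <> 0 ->
  dot u1 X = c1 -> dot u2 X = c2 -> dot u1 Y = c1 -> dot u2 Y = c2 -> X = Y.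
Proof.
  intros Hd H1 H2 H3 H4.
  destruct u1 as [p q], u2 as [r t], X as [X1 X2], Y as [Y1 Y2].
  unfold det2, dot in *; simpl in *.
  assert (A: (p*t - q*r) * (X1 - Y1) = t * ((p*X1+q*X2) - (p*Y1+q*Y2)) - q * ((r*X1+t*X2) - (r*Y1+t*Y2))) by ring.
  assert (B: (p*t - q*r) * (X2 - Y2) = p * ((r*X1+t*X2) - (r*Y1+t*Y2)) - r * ((p*X1+q*X2) - (p*Y1+q*Y2))) by ring.
  rewrite H1, H2, H3, H4 in A, B.
  replace (c1 - c1) with 0 in A, B by ring. replace (c2 - c2) with 0 in A, B by ring.
  assert (A' : (p*t - q*r) * (X1 - Y1) = 0) by (rewrite A; ring).
  assert (B' : (p*t - q*r) * (X2 - Y2) = 0) by (rewrite B; ring).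
  destruct (Rmult_integral _ _ A') as [h|h]; [contradiction|].
  destruct (Rmult_integral _ _ B') as [h'|h']; [contradiction|].
  f_equal; lra.
Qed.

Lemma on_line_dot X P Q : on_line X P Q -> dot (lnorm P Q) X = dot (lnorm P Q) P.
Proof. destruct X, P, Q; unfold on_line, lnorm, dot; simpl; intro H; nra. Qed.

Lemma cross_det P Q R S : det2 (lnorm P Q) (lnorm R S) = cross_dir P Q R S.
Proof. destruct P, Q, R, S; unfold det2, lnorm, cross_dir; simpl; ring. Qed.

Lemma circ_dot C P Q : sqdist C P = sqdist C Q -> dot (cuv P Q) C = ccv P Q.
Proof. destruct C, P, Q; unfold sqdist, dot, cuv, ccv, n2; simpl; intro H; nra. Qed.

Lemma dot_circ C P Q : dot (cuv P Q) C = ccv P Q -> sqdist C P = sqdist C Q.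
Proof. destruct C, P, Q; unfold sqdist, dot, cuv, ccv, n2; simpl; intro H; nra. Qed.

Lemma equi_circ p q r : equilateral p q r -> is_circumcenter (centroid p q r) p q r.
Proof.
  destruct p as [p1 p2], q as [q1 q2], r as [r1 r2].
  unfold equilateral, is_circumcenter, sqdist, centroid; cbn [fst snd]; intros [h1 h2].
  split.
  - apply Rminus_diag_uniq.
    transitivity ((((r1 - p1) ^ 2 + (r2 - p2) ^ 2) - ((q1 - r1) ^ 2 + (q2 - r2) ^ 2))/3);
      [field | rewrite <- h2; field].
  - apply Rminus_diag_uniq.
    transitivity ((((p1 - q1) ^ 2 + (p2 - q2) ^ 2) - ((r1 - p1) ^ 2 + (r2 - p2) ^ 2))/3);
      [field | rewrite h1, h2; field].
Qed.

Lemma ol_dir X Q d : dot (- snd d, fst d) X = dot (- snd d, fst d) Q -> on_line_dir X Q d.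
Proof. destruct X, Q, d; unfold on_line_dir, dot; simpl; intro H; nra. Qed.

Lemma prod_zero p q r : p <> 0 -> q <> 0 -> p * q * r / 4 = 0 -> r = 0.
Proof.
  intros Hp Hq H.
  replace r with ((p * q * r / 4) * (4 / (p * q))) by (field; auto).
  rewrite H; ring.
Qed.

Lemma prod_zero2 p q r : p <> 0 -> q <> 0 -> p * (q * r) = 0 -> r = 0.
Proof.
  intros Hp Hq H.
  replace r with ((p * (q * r)) * (1 / (p * q))) by (field; auto).
  rewrite H; ring.
Qed.

Definition Pt (a b ex ey : R) : pt := (a * ex, b * ey).
Definition Qt (a b ia ib x y s ex ey : R) : pt :=
  (3/2 * (a^2 - b^2) * ia * ex + ((a^2 - b^2)/2 - a^2) * ia * (x^3 - 3*x*y^2),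
   -(3/2) * (a^2 - b^2) * ib * ey + (a^2 - (a^2 - b^2)/2) * ib * (3*x^2*y - y^3)).

Ltac certify K hx hs ha hb :=
  transitivity K; [field | rewrite hx, hs, ha, hb; ring].

Lemma Qform1 (a b c u t x y s ia ib : R) (hc : c^2 = a^2-b^2) (Hia : ia = /a) (Hib : ib = /b)
  (hx : x^2+y^2-1 = 0) (hs : s^2-3 = 0) (ha : a*ia-1 = 0) (hb2 : b*ib-1 = 0)
  (hct : cos t = x) (hst : sin t = y)
  (hcu : cos u = x^3-3*x*y^2) (hsu : sin u = -(3*x^2*y-y^3)) :
  Defs.Delta a b c u t = Qt a b ia ib x y s x y.
Proof.
  unfold Defs.Delta, Qt. rewrite cos_plus, sin_plus, hct, hst, hcu, hsu, hc, <- Hia, <- Hib.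
  f_equal; apply Rminus_diag_uniq.
  - certify ((- (1/2)*b^2*ia*x + b^2*ia*x*y^2 - b^2*ia*x^3 + (1/2)*a^2*ia*x - a^2*ia*x*y^2 + a^2*ia*x^3)*(x^2+y^2-1)+0*(s^2-3)+0*(a*ia-1)+0*(b*ib-1)) hx hs ha hb2.
  - certify (((1/2)*b^2*ib*y + 2*b^2*ib*x^2*y - (1/2)*a^2*ib*y - 2*a^2*ib*x^2*y)*(x^2+y^2-1)+0*(s^2-3)+0*(a*ia-1)+0*(b*ib-1)) hx hs ha hb2.
Qed.

Lemma Qform2 (a b c u t x y s ia ib : R) (hc : c^2 = a^2-b^2) (Hia : ia = /a) (Hib : ib = /b)
  (hx : x^2+y^2-1 = 0) (hs : s^2-3 = 0) (ha : a*ia-1 = 0) (hb2 : b*ib-1 = 0)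
  (hct : cos t = (-x/2 + s*y/2)) (hst : sin t = (-y/2 - s*x/2))
  (hcu : cos u = x^3-3*x*y^2) (hsu : sin u = -(3*x^2*y-y^3)) :
  Defs.Delta a b c u t = Qt a b ia ib x y s (-x/2 + s*y/2) (-y/2 - s*x/2).
Proof.
  unfold Defs.Delta, Qt. rewrite cos_plus, sin_plus, hct, hst, hcu, hsu, hc, <- Hia, <- Hib.
  f_equal; apply Rminus_diag_uniq.
  - certify ((- (1/4)*b^2*ia*y*s - (1/4)*b^2*ia*y^3*s - (5/4)*b^2*ia*x + (1/2)*b^2*ia*x*s^2 + (1/4)*b^2*ia*x*y^2 + (1/2)*b^2*ia*x*y^2*s^2 - (1/4)*b^2*ia*x^2*y*s - (1/4)*b^2*ia*x^3 + (1/4)*a^2*ia*y*s + (1/4)*a^2*ia*y^3*s + (5/4)*a^2*ia*x - (1/2)*a^2*ia*x*s^2 - (1/4)*a^2*ia*x*y^2 - (1/2)*a^2*ia*x*y^2*s^2 + (1/4)*a^2*ia*x^2*y*s + (1/4)*a^2*ia*x^3)*(x^2+y^2-1)+((1/2)*b^2*ia*x - (1/2)*b^2*ia*x^3 - (1/2)*a^2*ia*x + (1/2)*a^2*ia*x^3)*(s^2-3)+0*(a*ia-1)+0*(b*ib-1)) hx hs ha hb2.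
  - certify (((1/2)*b^2*ib*y - (1/4)*b^2*ib*y*s^2 - (1/4)*b^2*ib*y^3*s^2 - (1/4)*b^2*ib*x*s - (1/4)*b^2*ib*x*y^2*s + (1/2)*b^2*ib*x^2*y + (1/4)*b^2*ib*x^2*y*s^2 - (1/4)*b^2*ib*x^3*s - (1/2)*a^2*ib*y + (1/4)*a^2*ib*y*s^2 + (1/4)*a^2*ib*y^3*s^2 + (1/4)*a^2*ib*x*s + (1/4)*a^2*ib*x*y^2*s - (1/2)*a^2*ib*x^2*y - (1/4)*a^2*ib*x^2*y*s^2 + (1/4)*a^2*ib*x^3*s)*(x^2+y^2-1)+(- (1/4)*b^2*ib*y + (1/2)*b^2*ib*x^2*y + (1/4)*a^2*ib*y - (1/2)*a^2*ib*x^2*y)*(s^2-3)+0*(a*ia-1)+0*(b*ib-1)) hx hs ha hb2.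
Qed.

Lemma Qform3 (a b c u t x y s ia ib : R) (hc : c^2 = a^2-b^2) (Hia : ia = /a) (Hib : ib = /b)
  (hx : x^2+y^2-1 = 0) (hs : s^2-3 = 0) (ha : a*ia-1 = 0) (hb2 : b*ib-1 = 0)
  (hct : cos t = (-x/2 - s*y/2)) (hst : sin t = (-y/2 + s*x/2))
  (hcu : cos u = x^3-3*x*y^2) (hsu : sin u = -(3*x^2*y-y^3)) :
  Defs.Delta a b c u t = Qt a b ia ib x y s (-x/2 - s*y/2) (-y/2 + s*x/2).
Proof.
  unfold Defs.Delta, Qt. rewrite cos_plus, sin_plus, hct, hst, hcu, hsu, hc, <- Hia, <- Hib.
  f_equal; apply Rminus_diag_uniq.
  - certify (((1/4)*b^2*ia*y*s + (1/4)*b^2*ia*y^3*s - (5/4)*b^2*ia*x + (1/2)*b^2*ia*x*s^2 + (1/4)*b^2*ia*x*y^2 + (1/2)*b^2*ia*x*y^2*s^2 + (1/4)*b^2*ia*x^2*y*s - (1/4)*b^2*ia*x^3 - (1/4)*a^2*ia*y*s - (1/4)*a^2*ia*y^3*s + (5/4)*a^2*ia*x - (1/2)*a^2*ia*x*s^2 - (1/4)*a^2*ia*x*y^2 - (1/2)*a^2*ia*x*y^2*s^2 - (1/4)*a^2*ia*x^2*y*s + (1/4)*a^2*ia*x^3)*(x^2+y^2-1)+((1/2)*b^2*ia*x - (1/2)*b^2*ia*x^3 - (1/2)*a^2*ia*x + (1/2)*a^2*ia*x^3)*(s^2-3)+0*(a*ia-1)+0*(b*ib-1)) hx hs ha hb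2.
  - certify (((1/2)*b^2*ib*y - (1/4)*b^2*ib*y*s^2 - (1/4)*b^2*ib*y^3*s^2 + (1/4)*b^2*ib*x*s + (1/4)*b^2*ib*x*y^2*s + (1/2)*b^2*ib*x^2*y + (1/4)*b^2*ib*x^2*y*s^2 + (1/4)*b^2*ib*x^3*s - (1/2)*a^2*ib*y + (1/4)*a^2*ib*y*s^2 + (1/4)*a^2*ib*y^3*s^2 - (1/4)*a^2*ib*x*s - (1/4)*a^2*ib*x*y^2*s - (1/2)*a^2*ib*x^2*y - (1/4)*a^2*ib*x^2*y*s^2 - (1/4)*a^2*ib*x^3*s)*(x^2+y^2-1)+(- (1/4)*b^2*ib*y + (1/2)*b^2*ib*x^2*y + (1/4)*a^2*ib*y - (1/2)*a^2*ib*x^2*y)*(s^2-3)+0*(a*ia-1)+0*(b*ib-1)) hx hs ha hb2.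
Qed.



Lemma core (a b ia ib x y s : R) (P1 P2 P3 P1' P2' P3' : pt)
  (hb : 0 < b) (hab : b < a) (hs0 : 0 < s)
  (hx : x^2+y^2-1 = 0) (hs : s^2-3 = 0) (ha : a*ia-1 = 0) (hb2 : b*ib-1 = 0)
  (e1 : P1 = Pt a b x y) (e2 : P2 = Pt a b (-x/2 + s*y/2) (-y/2 - s*x/2))
  (e3 : P3 = Pt a b (-x/2 - s*y/2) (-y/2 + s*x/2))
  (f1 : P1' = Qt a b ia ib x y s x y)
  (f2 : P2' = Qt a b ia ib x y s (-x/2 + s*y/2) (-y/2 - s*x/2))
  (f3 : P3' = Qt a b ia ib x y s (-x/2 - s*y/2) (-y/2 + s*x/2)) :
  let G := centroid P1 P2 P3 in
  ~ equilateral P1 P2 P3 /\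
  (exists C, is_circumcenter C P1 P2 P3) /\
  (forall C, is_circumcenter C P1 P2 P3 -> C <> G) /\
  (not_parallel P1 P2 P1' P2' -> not_parallel P1 P3 P1' P3' ->
   not_parallel P2 P3 P2' P3' ->
   forall X12 X13 X23 : pt,
     on_line X12 P1 P2 -> on_line X12 P1' P2' ->
     on_line X13 P1 P3 -> on_line X13 P1' P3' ->
     on_line X23 P2 P3 -> on_line X23 P2' P3' ->
     exists Q d : pt, d <> (0, 0) /\
       on_line_dir X12 Q d /\ on_line_dir X13 Q d /\ on_line_dir X23 Q d /\
       forall C, is_circumcenter C P1 P2 P3 -> dot d (vsub C G) = 0).
Proof.
  cbv zeta.
  set (C0 := ((a^2-b^2)*ia*(x^3-3*x*y^2)/4, (a^2-b^2)*ib*(3*x^2*y-y^3)/4)).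
  assert (HG : centroid P1 P2 P3 = (0, 0)).
  { subst; unfold centroid, Pt; simpl; f_equal; field. }
  rewrite HG.
  assert (Hcs : (x^3-3*x*y^2)^2 + (3*x^2*y-y^3)^2 = 1).
  { replace ((x^3-3*x*y^2)^2 + (3*x^2*y-y^3)^2) with ((x^2+y^2)^3) by ring.
    replace (x^2+y^2) with 1 by lra. ring. }
  assert (Hc2 : a^2 - b^2 <> 0) by nra.
  assert (Hia : ia <> 0) by (intro h; rewrite h in ha; lra).
  assert (Hib : ib <> 0) by (intro h; rewrite h in hb2; lra).
  assert (HC0nz : C0 <> (0,0)).
  { intro h. unfold C0 in h. pose proof (f_equal fst h) as h1; pose proof (f_equal snd h) as h2; cbn [fst snd] in h1, h2.
    apply prod_zero in h1; auto. apply prod_zero in h2; auto.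
    rewrite h1, h2 in Hcs. lra. }
  assert (Hdet : det2 (cuv P1 P2) (cuv P2 P3) <> 0).
  { assert (E : det2 (cuv P1 P2) (cuv P2 P3) + 6*a*b*s = 0).
    { subst; unfold det2, cuv, Pt; cbn [fst snd]. certify ((- 6*a*b*s)*(x^2+y^2-1)+0*(s^2-3)+0*(a*ia-1)+0*(b*ib-1)) hx hs ha hb2. }
    assert (0 < a*b*s) by (apply Rmult_lt_0_compat; [apply Rmult_lt_0_compat|]; lra).
    lra. }
  assert (HCa : dot (cuv P1 P2) C0 = ccv P1 P2).
  { apply Rminus_diag_uniq. subst; unfold C0, dot, cuv, ccv, n2, Pt; cbn [fst snd].
    certify (((3/4)*b^2 - (3/4)*b^3*ib - (3/4)*b^3*ib*y^2 - (1/4)*b^3*ib*x*y*s + 3*b^3*ib*x^2 + (3/4)*a*b^2*ia*x*y*s - (9/4)*a*b^2*ia*x^2 - (1/4)*a^2*s^2 + (3/4)*a^2*b*ib + (3/4)*a^2*b*ib*y^2 + (1/4)*a^2*b*ib*x*y*s - 3*a^2*b*ib*x^2 - (3/4)*a^3*ia*x*y*s + (9/4)*a^3*ia*x^2)*(x^2+y^2-1)+(- (1/4)*b^2*x^2 - (1/4)*a^2 + (1/4)*a^2*x^2)*(s^2-3)+((3/4)*b^2*x*y*s - (9/4)*b^2*x^2 - b^2*x^3*y*s + 3*b^2*x^4 - (3/4)*a^2*x*y*s + (9/4)*a^2*x^2 + a^2*x^3*y*s - 3*a^2*x^4)*(a*ia-1)+(- (3/4)*b^2 - (1/4)*b^2*x*y*s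 + (15/4)*b^2*x^2 + b^2*x^3*y*s - 3*b^2*x^4 + (3/4)*a^2 + (1/4)*a^2*x*y*s - (15/4)*a^2*x^2 - a^2*x^3*y*s + 3*a^2*x^4)*(b*ib-1)) hx hs ha hb2. }
  assert (HCb : dot (cuv P2 P3) C0 = ccv P2 P3).
  { apply Rminus_diag_uniq. subst; unfold C0, dot, cuv, ccv, n2, Pt; cbn [fst snd].
    certify (((1/2)*b^3*ib*x*y*s - (3/2)*a*b^2*ia*x*y*s - (1/2)*a^2*b*ib*x*y*s + (3/2)*a^3*ia*x*y*s)*(x^2+y^2-1)+0*(s^2-3)+(- (3/2)*b^2*x*y*s + 2*b^2*x^3*y*s + (3/2)*a^2*x*y*s - 2*a^2*x^3*y*s)*(a*ia-1)+((1/2)*b^2*x*y*s - 2*b^2*x^3*y*s - (1/2)*a^2*x*y*s + 2*a^2*x^3*y*s)*(b*ib-1)) hx hs ha hb2. }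
  assert (Huniq : forall C, is_circumcenter C P1 P2 P3 -> C = C0).
  { intros C [h1 h2]. apply circ_dot in h1. apply circ_dot in h2.
    exact (uniq2 _ _ _ _ _ _ Hdet h1 h2 HCa HCb). }
  split; [|split; [|split]].
  - intro Heq. apply equi_circ in Heq. rewrite HG in Heq.
    apply Huniq in Heq. apply HC0nz. symmetry. exact Heq.
  - exists C0. split; apply dot_circ; assumption.
  - intros C HC. rewrite (Huniq C HC). exact HC0nz.
  - intros np12 np13 np23 X12 X13 X23 h1 h1' h2 h2' h3 h3'.
    set (d := ((a^2+b^2)*(-(a*(3*x^2*y-y^3))), (a^2+b^2)*(b*(x^3-3*x*y^2)))).
    set (kk := -(a*b*(a^2-b^2))).
    assert (K12 : dot (- snd d, fst d) X12 = kk).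
    { apply (lin3 (lnorm P1 P2) (lnorm P1' P2') _ _ (dot (lnorm P1 P2) P1) (dot (lnorm P1' P2') P1')).
      - rewrite cross_det; exact np12.
      - apply on_line_dot; auto.
      - apply on_line_dot; auto.
      - subst; unfold d, kk, Dlin, det2, lnorm, dot, Pt, Qt; cbn [fst snd].
        certify (((9/8)*a*b^6*ia*s - (9/8)*a*b^6*ia*x*y*s^2 - (9/8)*a*b^6*ia*x*y^3*s^2 + (27/8)*a*b^6*ia*x^2*s + (27/8)*a*b^6*ia*x^2*y^2*s + (3/8)*a*b^6*ia*x^3*y*s^2 - (9/8)*a*b^6*ia*x^4*s - (9/8)*a*b^7*ia*ib*s - (9/8)*a*b^7*ia*ib*y^2*s - (9/8)*a*b^7*ia*ib*y^4*s + (9/16)*a*b^7*ia*ib*y^6*s + (27/8)*a*b^7*ia*ib*x*y + (3/4)*a*b^7*ia*ib*x*y*s^2 + (27/8)*a*b^7*ia*ib*x*y^3 + (3/4)*a*b^7*ia*ib*x*y^3*s^2 + (27/8)*a*b^7*ia*ib*x*y^5 - (3/8)*a*b^7*ia*ib*x*y^5*s^2 - (9/4)*a*b^7*ia*ib*x^2*s - (27/8)*a*b^7*ia*ib*x^2*y^2*s - (45/16)*a*b^7*ia*ib*x^2*y^4*s - (27/8)*a*b^7*ia*ib*x^3*y + (3/2)*a*b^7*ia*ib*x^3*y*s^2 + (9/4)*a*b^7*ia*ib*x^4*s - (45/16)*a*b^7*ia*ib*x^4*y^2*s - (27/8)*a*b^7*ia*ib*x^5*y + (3/8)*a*b^7*ia*ib*x^5*y*s^2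 + (9/16)*a*b^7*ia*ib*x^6*s - (9/8)*a^2*b^5*ib*y^2*s - (9/8)*a^2*b^5*ib*y^4*s - (3/8)*a^2*b^5*ib*x*y*s^2 - (3/8)*a^2*b^5*ib*x*y^3*s^2 + (9/2)*a^2*b^5*ib*x^2*s + (27/8)*a^2*b^5*ib*x^2*y^2*s + (9/8)*a^2*b^5*ib*x^3*y*s^2 - (9/4)*a^3*b^4*ia*s + (9/4)*a^3*b^5*ia*ib*s + (9/4)*a^3*b^5*ia*ib*y^2*s + (9/4)*a^3*b^5*ia*ib*y^4*s + (9/16)*a^3*b^5*ia*ib*y^6*s + (27/8)*a^3*b^5*ia*ib*x*y - (3/2)*a^3*b^5*ia*ib*x*y*s^2 + (27/8)*a^3*b^5*ia*ib*x*y^3 - (3/2)*a^3*b^5*ia*ib*x*y^3*s^2 + (27/8)*a^3*b^5*ia*ib*x*y^5 - (3/8)*a^3*b^5*ia*ib*x*y^5*s^2 - (45/8)*a^3*b^5*ia*ib*x^2*s - (27/8)*a^3*b^5*ia*ib*x^2*y^2*s - (45/16)*a^3*b^5*ia*ib*x^2*y^4*s - (27/8)*a^3*b^5*ia*ib*x^3*y - (3/4)*a^3*b^5*ia*ib*x^3*y*s^2 - (9/8)*a^3*b^5*ia*ib*x^4*s - (45/16)*a^3*b^5*ia*ib*x^4*y^2*s - (27/8)*a^3*b^5*ia*ib*x^5*y + (3/8)*a^3*b^5*ia*ib*x^5*y*s^2 + (9/16)*a^3*b^5*ia*ib*x^6*s - (9/4)*a^4*b^3*ib*s + (9/8)*a^5*b^2*ia*s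 + (9/8)*a^5*b^2*ia*x*y*s^2 + (9/8)*a^5*b^2*ia*x*y^3*s^2 - (27/8)*a^5*b^2*ia*x^2*s - (27/8)*a^5*b^2*ia*x^2*y^2*s - (3/8)*a^5*b^2*ia*x^3*y*s^2 + (9/8)*a^5*b^2*ia*x^4*s + (9/8)*a^5*b^3*ia*ib*s + (9/8)*a^5*b^3*ia*ib*y^2*s + (9/8)*a^5*b^3*ia*ib*y^4*s - (9/16)*a^5*b^3*ia*ib*y^6*s - (27/8)*a^5*b^3*ia*ib*x*y - (3/4)*a^5*b^3*ia*ib*x*y*s^2 - (27/8)*a^5*b^3*ia*ib*x*y^3 - (3/4)*a^5*b^3*ia*ib*x*y^3*s^2 - (27/8)*a^5*b^3*ia*ib*x*y^5 + (3/8)*a^5*b^3*ia*ib*x*y^5*s^2 + (9/4)*a^5*b^3*ia*ib*x^2*s + (27/8)*a^5*b^3*ia*ib*x^2*y^2*s + (45/16)*a^5*b^3*ia*ib*x^2*y^4*s + (27/8)*a^5*b^3*ia*ib*x^3*y - (3/2)*a^5*b^3*ia*ib*x^3*y*s^2 - (9/4)*a^5*b^3*ia*ib*x^4*s + (45/16)*a^5*b^3*ia*ib*x^4*y^2*s + (27/8)*a^5*b^3*ia*ib*x^5*y - (3/8)*a^5*b^3*ia*ib*x^5*y*s^2 - (9/16)*a^5*b^3*ia*ib*x^6*s + (9/4)*a^6*b*ib*s + (9/8)*a^6*b*ib*y^2*s + (9/8)*a^6*b*ib*y^4*s + (3/8)*a^6*b*ib*x*y*s^2 + (3/8)*a^6*b*ib*x*y^3*s^2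 - (9/2)*a^6*b*ib*x^2*s - (27/8)*a^6*b*ib*x^2*y^2*s - (9/8)*a^6*b*ib*x^3*y*s^2 - (9/4)*a^7*b*ia*ib*s - (9/4)*a^7*b*ia*ib*y^2*s - (9/4)*a^7*b*ia*ib*y^4*s - (9/16)*a^7*b*ia*ib*y^6*s - (27/8)*a^7*b*ia*ib*x*y + (3/2)*a^7*b*ia*ib*x*y*s^2 - (27/8)*a^7*b*ia*ib*x*y^3 + (3/2)*a^7*b*ia*ib*x*y^3*s^2 - (27/8)*a^7*b*ia*ib*x*y^5 + (3/8)*a^7*b*ia*ib*x*y^5*s^2 + (45/8)*a^7*b*ia*ib*x^2*s + (27/8)*a^7*b*ia*ib*x^2*y^2*s + (45/16)*a^7*b*ia*ib*x^2*y^4*s + (27/8)*a^7*b*ia*ib*x^3*y + (3/4)*a^7*b*ia*ib*x^3*y*s^2 + (9/8)*a^7*b*ia*ib*x^4*s + (45/16)*a^7*b*ia*ib*x^4*y^2*s + (27/8)*a^7*b*ia*ib*x^5*y - (3/8)*a^7*b*ia*ib*x^5*y*s^2 - (9/16)*a^7*b*ia*ib*x^6*s)*(x^2+y^2-1)+(- (3/4)*a*b^6*ia*x*y + (3/2)*a*b^6*ia*x^3*y + (3/4)*a*b^7*ia*ib*x*y + (3/4)*a*b^7*ia*ib*x^3*y + (3/2)*a^2*b^5*ib*x^3*y - (3/4)*a^3*b^4*ia*x*y - (3/2)*a^3*b^5*ia*ib*x*y + (3/4)*a^3*b^5*ia*ib*x^3*y - (3/4)*a^4*b^3*ib*x*y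 + (3/2)*a^5*b^2*ia*x*y - (3/2)*a^5*b^2*ia*x^3*y - (3/4)*a^5*b^3*ia*ib*x*y - (3/4)*a^5*b^3*ia*ib*x^3*y + (3/4)*a^6*b*ib*x*y - (3/2)*a^6*b*ib*x^3*y + (3/2)*a^7*b*ia*ib*x*y - (3/4)*a^7*b*ia*ib*x^3*y)*(s^2-3)+((9/8)*b^6*s - (45/8)*b^6*x*y + (9/8)*b^6*x^2*s + (9/2)*b^6*x^3*y - (9/2)*b^6*x^4*s - (9/8)*b^7*ib*s + (45/8)*b^7*ib*x*y - (9/8)*b^7*ib*x^2*s - (9/2)*b^7*ib*x^3*y + (9/2)*b^7*ib*x^4*s - (9/4)*a^2*b^4*s + (9/2)*a^2*b^4*x*y + (9/2)*a^2*b^4*x^2*s + (9/4)*a^2*b^5*ib*s - (9/8)*a^2*b^5*ib*x*y - (63/8)*a^2*b^5*ib*x^2*s - (9/2)*a^2*b^5*ib*x^3*y + (9/2)*a^2*b^5*ib*x^4*s + (9/8)*a^4*b^2*s + (9/8)*a^4*b^2*x*y - (45/8)*a^4*b^2*x^2*s - (9/2)*a^4*b^2*x^3*y + (9/2)*a^4*b^2*x^4*s + (9/8)*a^4*b^3*ib*s - (45/8)*a^4*b^3*ib*x*y + (9/8)*a^4*b^3*ib*x^2*s + (9/2)*a^4*b^3*ib*x^3*y - (9/2)*a^4*b^3*ib*x^4*s - (9/4)*a^6*b*ib*s + (9/8)*a^6*b*ib*x*y + (63/8)*a^6*b*ib*x^2*s + (9/2)*a^6*b*ib*x^3*y - (9/2)*a^6*b*ib*x^4*s)*(a*ia-1)+(-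 (9/8)*b^6*s + (45/8)*b^6*x*y - (9/8)*b^6*x^2*s - (9/2)*b^6*x^3*y + (9/2)*b^6*x^4*s + (9/4)*a^2*b^4*s - (9/2)*a^2*b^4*x*y - (9/2)*a^2*b^4*x^2*s - (9/8)*a^4*b^2*s - (9/8)*a^4*b^2*x*y + (45/8)*a^4*b^2*x^2*s + (9/2)*a^4*b^2*x^3*y - (9/2)*a^4*b^2*x^4*s)*(b*ib-1)) hx hs ha hb2. }
    assert (K13 : dot (- snd d, fst d) X13 = kk).
    { apply (lin3 (lnorm P1 P3) (lnorm P1' P3') _ _ (dot (lnorm P1 P3) P1) (dot (lnorm P1' P3') P1')).
      - rewrite cross_det; exact np13.
      - apply on_line_dot; auto.
      - apply on_line_dot; auto.
      - subst; unfold d, kk, Dlin, det2, lnorm, dot, Pt, Qt; cbn [fst snd].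
        certify ((- (9/8)*a*b^6*ia*s - (9/8)*a*b^6*ia*x*y*s^2 - (9/8)*a*b^6*ia*x*y^3*s^2 - (27/8)*a*b^6*ia*x^2*s - (27/8)*a*b^6*ia*x^2*y^2*s + (3/8)*a*b^6*ia*x^3*y*s^2 + (9/8)*a*b^6*ia*x^4*s + (9/8)*a*b^7*ia*ib*s + (9/8)*a*b^7*ia*ib*y^2*s + (9/8)*a*b^7*ia*ib*y^4*s - (9/16)*a*b^7*ia*ib*y^6*s + (27/8)*a*b^7*ia*ib*x*y + (3/4)*a*b^7*ia*ib*x*y*s^2 + (27/8)*a*b^7*ia*ib*x*y^3 + (3/4)*a*b^7*ia*ib*x*y^3*s^2 + (27/8)*a*b^7*ia*ib*x*y^5 - (3/8)*a*b^7*ia*ib*x*y^5*s^2 + (9/4)*a*b^7*ia*ib*x^2*s + (27/8)*a*b^7*ia*ib*x^2*y^2*s + (45/16)*a*b^7*ia*ib*x^2*y^4*s - (27/8)*a*b^7*ia*ib*x^3*y + (3/2)*a*b^7*ia*ib*x^3*y*s^2 - (9/4)*a*b^7*ia*ib*x^4*s + (45/16)*a*b^7*ia*ib*x^4*y^2*s - (27/8)*a*b^7*ia*ib*x^5*y + (3/8)*a*b^7*ia*ib*x^5*y*s^2 - (9/16)*a*b^7*ia*ib*x^6*s + (9/8)*a^2*b^5*ib*y^2*s + (9/8)*a^2*b^5*ib*y^4*s - (3/8)*a^2*b^5*ib*x*y*s^2 - (3/8)*a^2*b^5*ib*x*y^3*s^2 - (9/2)*a^2*b^5*ib*x^2*s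 - (27/8)*a^2*b^5*ib*x^2*y^2*s + (9/8)*a^2*b^5*ib*x^3*y*s^2 + (9/4)*a^3*b^4*ia*s - (9/4)*a^3*b^5*ia*ib*s - (9/4)*a^3*b^5*ia*ib*y^2*s - (9/4)*a^3*b^5*ia*ib*y^4*s - (9/16)*a^3*b^5*ia*ib*y^6*s + (27/8)*a^3*b^5*ia*ib*x*y - (3/2)*a^3*b^5*ia*ib*x*y*s^2 + (27/8)*a^3*b^5*ia*ib*x*y^3 - (3/2)*a^3*b^5*ia*ib*x*y^3*s^2 + (27/8)*a^3*b^5*ia*ib*x*y^5 - (3/8)*a^3*b^5*ia*ib*x*y^5*s^2 + (45/8)*a^3*b^5*ia*ib*x^2*s + (27/8)*a^3*b^5*ia*ib*x^2*y^2*s + (45/16)*a^3*b^5*ia*ib*x^2*y^4*s - (27/8)*a^3*b^5*ia*ib*x^3*y - (3/4)*a^3*b^5*ia*ib*x^3*y*s^2 + (9/8)*a^3*b^5*ia*ib*x^4*s + (45/16)*a^3*b^5*ia*ib*x^4*y^2*s - (27/8)*a^3*b^5*ia*ib*x^5*y + (3/8)*a^3*b^5*ia*ib*x^5*y*s^2 - (9/16)*a^3*b^5*ia*ib*x^6*s + (9/4)*a^4*b^3*ib*s - (9/8)*a^5*b^2*ia*s + (9/8)*a^5*b^2*ia*x*y*s^2 + (9/8)*a^5*b^2*ia*x*y^3*s^2 + (27/8)*a^5*b^2*ia*x^2*s + (27/8)*a^5*b^2*ia*x^2*y^2*s - (3/8)*a^5*b^2*ia*x^3*y*s^2 - (9/8)*a^5*b^2*ia*x^4*s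 - (9/8)*a^5*b^3*ia*ib*s - (9/8)*a^5*b^3*ia*ib*y^2*s - (9/8)*a^5*b^3*ia*ib*y^4*s + (9/16)*a^5*b^3*ia*ib*y^6*s - (27/8)*a^5*b^3*ia*ib*x*y - (3/4)*a^5*b^3*ia*ib*x*y*s^2 - (27/8)*a^5*b^3*ia*ib*x*y^3 - (3/4)*a^5*b^3*ia*ib*x*y^3*s^2 - (27/8)*a^5*b^3*ia*ib*x*y^5 + (3/8)*a^5*b^3*ia*ib*x*y^5*s^2 - (9/4)*a^5*b^3*ia*ib*x^2*s - (27/8)*a^5*b^3*ia*ib*x^2*y^2*s - (45/16)*a^5*b^3*ia*ib*x^2*y^4*s + (27/8)*a^5*b^3*ia*ib*x^3*y - (3/2)*a^5*b^3*ia*ib*x^3*y*s^2 + (9/4)*a^5*b^3*ia*ib*x^4*s - (45/16)*a^5*b^3*ia*ib*x^4*y^2*s + (27/8)*a^5*b^3*ia*ib*x^5*y - (3/8)*a^5*b^3*ia*ib*x^5*y*s^2 + (9/16)*a^5*b^3*ia*ib*x^6*s - (9/4)*a^6*b*ib*s - (9/8)*a^6*b*ib*y^2*s - (9/8)*a^6*b*ib*y^4*s + (3/8)*a^6*b*ib*x*y*s^2 + (3/8)*a^6*b*ib*x*y^3*s^2 + (9/2)*a^6*b*ib*x^2*s + (27/8)*a^6*b*ib*x^2*y^2*s - (9/8)*a^6*b*ib*x^3*y*s^2 + (9/4)*a^7*b*ia*ib*s + (9/4)*a^7*b*ia*ib*y^2*s + (9/4)*a^7*b*ia*ib*y^4*s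 + (9/16)*a^7*b*ia*ib*y^6*s - (27/8)*a^7*b*ia*ib*x*y + (3/2)*a^7*b*ia*ib*x*y*s^2 - (27/8)*a^7*b*ia*ib*x*y^3 + (3/2)*a^7*b*ia*ib*x*y^3*s^2 - (27/8)*a^7*b*ia*ib*x*y^5 + (3/8)*a^7*b*ia*ib*x*y^5*s^2 - (45/8)*a^7*b*ia*ib*x^2*s - (27/8)*a^7*b*ia*ib*x^2*y^2*s - (45/16)*a^7*b*ia*ib*x^2*y^4*s + (27/8)*a^7*b*ia*ib*x^3*y + (3/4)*a^7*b*ia*ib*x^3*y*s^2 - (9/8)*a^7*b*ia*ib*x^4*s - (45/16)*a^7*b*ia*ib*x^4*y^2*s + (27/8)*a^7*b*ia*ib*x^5*y - (3/8)*a^7*b*ia*ib*x^5*y*s^2 + (9/16)*a^7*b*ia*ib*x^6*s)*(x^2+y^2-1)+(- (3/4)*a*b^6*ia*x*y + (3/2)*a*b^6*ia*x^3*y + (3/4)*a*b^7*ia*ib*x*y + (3/4)*a*b^7*ia*ib*x^3*y + (3/2)*a^2*b^5*ib*x^3*y - (3/4)*a^3*b^4*ia*x*y - (3/2)*a^3*b^5*ia*ib*x*y + (3/4)*a^3*b^5*ia*ib*x^3*y - (3/4)*a^4*b^3*ib*x*y + (3/2)*a^5*b^2*ia*x*y - (3/2)*a^5*b^2*ia*x^3*y - (3/4)*a^5*b^3*ia*ib*x*y - (3/4)*a^5*b^3*ia*ib*x^3*y + (3/4)*a^6*b*ib*x*y - (3/2)*a^6*b*ib*x^3*y + (3/2)*a^7*b*ia*ib*x*y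 - (3/4)*a^7*b*ia*ib*x^3*y)*(s^2-3)+(- (9/8)*b^6*s - (45/8)*b^6*x*y - (9/8)*b^6*x^2*s + (9/2)*b^6*x^3*y + (9/2)*b^6*x^4*s + (9/8)*b^7*ib*s + (45/8)*b^7*ib*x*y + (9/8)*b^7*ib*x^2*s - (9/2)*b^7*ib*x^3*y - (9/2)*b^7*ib*x^4*s + (9/4)*a^2*b^4*s + (9/2)*a^2*b^4*x*y - (9/2)*a^2*b^4*x^2*s - (9/4)*a^2*b^5*ib*s - (9/8)*a^2*b^5*ib*x*y + (63/8)*a^2*b^5*ib*x^2*s - (9/2)*a^2*b^5*ib*x^3*y - (9/2)*a^2*b^5*ib*x^4*s - (9/8)*a^4*b^2*s + (9/8)*a^4*b^2*x*y + (45/8)*a^4*b^2*x^2*s - (9/2)*a^4*b^2*x^3*y - (9/2)*a^4*b^2*x^4*s - (9/8)*a^4*b^3*ib*s - (45/8)*a^4*b^3*ib*x*y - (9/8)*a^4*b^3*ib*x^2*s + (9/2)*a^4*b^3*ib*x^3*y + (9/2)*a^4*b^3*ib*x^4*s + (9/4)*a^6*b*ib*s + (9/8)*a^6*b*ib*x*y - (63/8)*a^6*b*ib*x^2*s + (9/2)*a^6*b*ib*x^3*y + (9/2)*a^6*b*ib*x^4*s)*(a*ia-1)+((9/8)*b^6*s + (45/8)*b^6*x*y + (9/8)*b^6*x^2*s - (9/2)*b^6*x^3*y - (9/2)*b^6*x^4*s - (9/4)*a^2*b^4*s - (9/2)*a^2*b^4*x*y + (9/2)*a^2*b^4*x^2*s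 + (9/8)*a^4*b^2*s - (9/8)*a^4*b^2*x*y - (45/8)*a^4*b^2*x^2*s + (9/2)*a^4*b^2*x^3*y + (9/2)*a^4*b^2*x^4*s)*(b*ib-1)) hx hs ha hb2. }
    assert (K23 : dot (- snd d, fst d) X23 = kk).
    { apply (lin3 (lnorm P2 P3) (lnorm P2' P3') _ _ (dot (lnorm P2 P3) P2) (dot (lnorm P2' P3') P2')).
      - rewrite cross_det; exact np23.
      - apply on_line_dot; auto.
      - apply on_line_dot; auto.
      - subst; unfold d, kk, Dlin, det2, lnorm, dot, Pt, Qt; cbn [fst snd].
        certify (((9/4)*a*b^6*ia*x*y*s^2 + (9/4)*a*b^6*ia*x*y^3*s^2 - (3/4)*a*b^6*ia*x^3*y*s^2 - (15/4)*a*b^7*ia*ib*x*y*s^2 - (15/4)*a*b^7*ia*ib*x*y^3*s^2 - (3/2)*a*b^7*ia*ib*x*y^5*s^2 - (3/4)*a*b^7*ia*ib*x^3*y*s^2 + (3/2)*a*b^7*ia*ib*x^5*y*s^2 + (3/4)*a^2*b^5*ib*x*y*s^2 + (3/4)*a^2*b^5*ib*x*y^3*s^2 - (9/4)*a^2*b^5*ib*x^3*y*s^2 + (3/4)*a^3*b^5*ia*ib*x*y*s^2 + (3/4)*a^3*b^5*ia*ib*x*y^3*s^2 - (3/2)*a^3*b^5*ia*ib*x*y^5*s^2 + (15/4)*a^3*b^5*ia*ib*x^3*y*s^2 + (3/2)*a^3*b^5*ia*ib*x^5*y*s^2 - (9/4)*a^5*b^2*ia*x*y*s^2 - (9/4)*a^5*b^2*ia*x*y^3*s^2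 + (3/4)*a^5*b^2*ia*x^3*y*s^2 + (15/4)*a^5*b^3*ia*ib*x*y*s^2 + (15/4)*a^5*b^3*ia*ib*x*y^3*s^2 + (3/2)*a^5*b^3*ia*ib*x*y^5*s^2 + (3/4)*a^5*b^3*ia*ib*x^3*y*s^2 - (3/2)*a^5*b^3*ia*ib*x^5*y*s^2 - (3/4)*a^6*b*ib*x*y*s^2 - (3/4)*a^6*b*ib*x*y^3*s^2 + (9/4)*a^6*b*ib*x^3*y*s^2 - (3/4)*a^7*b*ia*ib*x*y*s^2 - (3/4)*a^7*b*ia*ib*x*y^3*s^2 + (3/2)*a^7*b*ia*ib*x*y^5*s^2 - (15/4)*a^7*b*ia*ib*x^3*y*s^2 - (3/2)*a^7*b*ia*ib*x^5*y*s^2)*(x^2+y^2-1)+((15/4)*a*b^6*ia*x*y - 3*a*b^6*ia*x^3*y - (15/4)*a*b^7*ia*ib*x*y + 3*a*b^7*ia*ib*x^3*y + (9/4)*a^2*b^5*ib*x*y - 3*a^2*b^5*ib*x^3*y - 3*a^3*b^4*ia*x*y + (3/4)*a^3*b^5*ia*ib*x*y + 3*a^3*b^5*ia*ib*x^3*y - 3*a^4*b^3*ib*x*y - (3/4)*a^5*b^2*ia*x*y + 3*a^5*b^2*ia*x^3*y + (15/4)*a^5*b^3*ia*ib*x*y - 3*a^5*b^3*ia*ib*x^3*y + (3/4)*a^6*b*ib*x*y + 3*a^6*b*ib*x^3*y - (3/4)*a^7*b*ia*ib*x*y - 3*a^7*b*ia*ib*x^3*y)*(s^2-3)+((45/4)*b^6*x*y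 - 9*b^6*x^3*y - (45/4)*b^7*ib*x*y + 9*b^7*ib*x^3*y - 9*a^2*b^4*x*y + (9/4)*a^2*b^5*ib*x*y + 9*a^2*b^5*ib*x^3*y - (9/4)*a^4*b^2*x*y + 9*a^4*b^2*x^3*y + (45/4)*a^4*b^3*ib*x*y - 9*a^4*b^3*ib*x^3*y - (9/4)*a^6*b*ib*x*y - 9*a^6*b*ib*x^3*y)*(a*ia-1)+(- (45/4)*b^6*x*y + 9*b^6*x^3*y + 9*a^2*b^4*x*y + (9/4)*a^4*b^2*x*y - 9*a^4*b^2*x^3*y)*(b*ib-1)) hx hs ha hb2. }
    exists X12, d. split; [|split; [|split; [|split]]].
    + intro h. unfold d in h. pose proof (f_equal fst h) as h1''; pose proof (f_equal snd h) as h2''; cbn [fst snd] in h1'', h2''.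
      assert (Hw : a^2+b^2 <> 0) by nra.
      assert (Ha0 : a <> 0) by lra. assert (Hb0 : b <> 0) by lra.
      assert (s3 : 3*x^2*y-y^3 = 0).
      { apply (prod_zero2 (a^2+b^2) a); auto. replace ((a^2+b^2)*(a*(3*x^2*y-y^3))) with (-((a^2+b^2)*(-(a*(3*x^2*y-y^3))))) by ring. rewrite h1''; ring. }
      assert (c3 : x^3-3*x*y^2 = 0) by (apply (prod_zero2 (a^2+b^2) b); auto).
      rewrite s3, c3 in Hcs. lra.
    + apply ol_dir. congruence.
    + apply ol_dir. congruence.
    + apply ol_dir. congruence.
    + intros C HC. rewrite (Huniq C HC). apply Rminus_diag_uniq.
      unfold d, C0, dot, vsub; cbn [fst snd].
      certify ((- (3/4)*b^5*ib*x*y - (3/4)*b^5*ib*x*y^3 + (13/4)*b^5*ib*x^3*y + (3/4)*a*b^4*ia*x*y + (3/4)*a*b^4*ia*x*y^3 - (13/4)*a*b^4*ia*x^3*y + (3/4)*a^4*b*ib*x*y + (3/4)*a^4*b*ib*x*y^3 - (13/4)*a^4*b*ib*x^3*y - (3/4)*a^5*ia*x*y - (3/4)*a^5*ia*x*y^3 + (13/4)*a^5*ia*x^3*y)*(x^2+y^2-1)+0*(s^2-3)+((3/4)*b^4*x*y - 4*b^4*x^3*y + 4*b^4*x^5*y - (3/4)*a^4*x*y + 4*a^4*x^3*y - 4*a^4*x^5*y)*(a*ia-1)+(- (3/4)*b^4*x*y + 4*b^4*x^3*y - 4*b^4*x^5*y + (3/4)*a^4*x*y - 4*a^4*x^3*y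 + 4*a^4*x^5*y)*(b*ib-1)) hx hs ha hb2.
Qed.

Theorem theorem8p4 (a b c u : R)
  (hb : 0 < b) (hab : b < a) (hc : 0 < c) (hc2 : c ^ 2 = a ^ 2 - b ^ 2) :
  let P1 := Pi a b u 1 in let P2 := Pi a b u 2 in let P3 := Pi a b u 3 in
  let P1' := Pi' a b c u 1 in let P2' := Pi' a b c u 2 in let P3' := Pi' a b c u 3 in
  let G := centroid P1 P2 P3 in
  (* T is never equilateral; its Euler line GC is well defined *)
  ~ equilateral P1 P2 P3 /\
  (exists C, is_circumcenter C P1 P2 P3) /\
  (forall C, is_circumcenter C P1 P2 P3 -> C <> G) /\
  (* perspectrix statement *)
  (not_parallel P1 P2 P1' P2' -> not_parallel P1 P3 P1' P3' ->
   not_parallel P2 P3 P2' P3' ->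
   forall X12 X13 X23 : pt,
     on_line X12 P1 P2 -> on_line X12 P1' P2' ->
     on_line X13 P1 P3 -> on_line X13 P1' P3' ->
     on_line X23 P2 P3 -> on_line X23 P2' P3' ->
     exists Q d : pt, d <> (0, 0) /\
       on_line_dir X12 Q d /\ on_line_dir X13 Q d /\ on_line_dir X23 Q d /\
       forall C, is_circumcenter C P1 P2 P3 -> dot d (vsub C G) = 0).
Proof.
  cbv zeta.
  assert (Ha0 : 0 < a) by lra.
  set (th := -u/3).
  assert (Ht1 : tcusp u 1 = th) by (unfold tcusp, th; cbn [INR]; field).
  assert (Ht2 : tcusp u 2 = th - 2*PI/3) by (unfold tcusp, th; cbn [INR]; field).
  assert (Ht3 : tcusp u 3 = (th - 2*PI/3) - 2*PI/3) by (unfold tcusp, th; cbn [INR]; field).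
  assert (Hs3 : sqrt 3 * sqrt 3 = 3) by (apply sqrt_sqrt; lra).
  assert (hs : sqrt 3 ^ 2 - 3 = 0) by (replace (sqrt 3 ^ 2) with (sqrt 3 * sqrt 3) by ring; lra).
  assert (hs0 : 0 < sqrt 3) by (apply sqrt_lt_R0; lra).
  assert (Hc23 : cos (2*PI/3) = -1/2).
  { replace (2*PI/3) with (PI/3 + PI/3) by field. rewrite cos_plus, cos_PI3, sin_PI3.
    replace (sqrt 3 / 2 * (sqrt 3 / 2)) with (sqrt 3 * sqrt 3 / 4) by field. rewrite Hs3. field. }
  assert (Hs23 : sin (2*PI/3) = sqrt 3/2).
  { replace (2*PI/3) with (PI/3 + PI/3) by field. rewrite sin_plus, cos_PI3, sin_PI3. field. }
  assert (hx : cos th ^ 2 + sin th ^ 2 - 1 = 0).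
  { pose proof (sin2_cos2 th) as H. unfold Rsqr in H. nra. }
  assert (ha : a * / a - 1 = 0) by (field; lra).
  assert (hb2 : b * / b - 1 = 0) by (field; lra).
  assert (ct2 : cos (tcusp u 2) = - cos th / 2 + sqrt 3 * sin th / 2).
  { rewrite Ht2, cos_minus, Hc23, Hs23; field. }
  assert (st2 : sin (tcusp u 2) = - sin th / 2 - sqrt 3 * cos th / 2).
  { rewrite Ht2, sin_minus, Hc23, Hs23; field. }
  assert (ct3 : cos (tcusp u 3) = - cos th / 2 - sqrt 3 * sin th / 2).
  { rewrite Ht3. repeat (rewrite cos_minus || rewrite sin_minus). rewrite Hc23, Hs23.
    apply Rminus_diag_uniq.
    transitivity ((sqrt 3 * sqrt 3 - 3) * (- cos th / 4)); [field | rewrite Hs3; ring]. }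
  assert (st3 : sin (tcusp u 3) = - sin th / 2 + sqrt 3 * cos th / 2).
  { rewrite Ht3. repeat (rewrite cos_minus || rewrite sin_minus). rewrite Hc23, Hs23.
    apply Rminus_diag_uniq.
    transitivity ((sqrt 3 * sqrt 3 - 3) * (- sin th / 4)); [field | rewrite Hs3; ring]. }
  assert (Hu : u = -(th + (th + th))) by (unfold th; field).
  assert (hcu : cos u = cos th ^ 3 - 3 * cos th * sin th ^ 2).
  { rewrite Hu, cos_neg; repeat (rewrite cos_plus || rewrite sin_plus). ring. }
  assert (hsu : sin u = -(3 * cos th ^ 2 * sin th - sin th ^ 3)).
  { rewrite Hu, sin_neg; repeat (rewrite cos_plus || rewrite sin_plus). ring. }
  refine (core a b (/a) (/b) (cos th) (sin th) (sqrt 3) _ _ _ _ _ _ hb hab hs0 hx hs ha hb2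
            _ _ _ _ _ _).
  - unfold Pi, Pe, Pt. rewrite Ht1. reflexivity.
  - unfold Pi, Pe, Pt. rewrite ct2, st2. reflexivity.
  - unfold Pi, Pe, Pt. rewrite ct3, st3. reflexivity.
  - unfold Pi'. apply Qform1; auto. rewrite Ht1; reflexivity. rewrite Ht1; reflexivity.
  - unfold Pi'. apply Qform2; auto.
  - unfold Pi'. apply Qform3; auto.
Qed.
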